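(* If $L$ is a finite modular i--lattice, in particular if $L$ is a finite De Morgan algebra, in particular if $L$ is a finite Kleene algebra, then ${\rm Con}_{\mathbb{BI}}(L)$ is a Boolean algebra; in particular its cardinality is a natural power of $2$.
   Context: An i--lattice is a lattice $L$ with a unary operation $'$ such that $a''=a$ and $a\leq b$ implies $b'\leq a'$. A De Morgan algebra is a distributive bounded i--lattice; a Kleene algebra is a De Morgan algebra satisfying $a\wedge a'\leq b\vee b'$ for all $a,b$. ${\rm Con}_{\mathbb{BI}}(L)$ is the lattice of congruences of $L$ with respect to $\vee,\wedge,'$ (and the bounds, which does not change the congruences), i.e. lattice congruences $\theta$ such that $(a,b)\in\theta$ implies $(a',b')\in\theta$. *)

(* Defs.v *)
From HB Require Import structures.
From mathcomp Require Import all_boot all_order.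
Set Implicit Arguments. Unset Strict Implicit. Unset Printing Implicit Defensive.
Import Order.Theory.
Local Open Scope order_scope.

Definition modular_lattice d (L : latticeType d) : Prop :=
  forall a b c : L, a <= c -> a `|` (b `&` c) = (a `|` b) `&` c.

Definition i_lattice_inv d (L : latticeType d) (inv : L -> L) : Prop :=
  involutive inv /\ (forall a b : L, a <= b -> inv b <= inv a).

Definition bi_congruence d (L : finLatticeType d) (inv : L -> L)
    (th : {set L * L}) : bool :=
  [&& [forall x : L, (x, x) \in th],
      [forall x : L, forall y : L, ((x, y) \in th) ==> ((y, x) \in th)],
      [forall x : L, forall y : L, forall z : L,
         ((x, y) \in th) && ((y, z) \in th) ==> ((x, z) \in th)],
      [forall a : L, forall b : L, forall c : L, forall e : L,
         ((a, b) \in th) && ((c, e) \in th) ==>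
           ((a `|` c, b `|` e) \in th) && ((a `&` c, b `&` e) \in th)] &
      [forall a : L, forall b : L, ((a, b) \in th) ==> ((inv a, inv b) \in th)]].

Definition Con_BI d (L : finLatticeType d) (inv : L -> L) : {set {set L * L}} :=
  [set th : {set L * L} | bi_congruence inv th].

Section SetPoset.
Variable U : finType.
Variable S : {set {set U}}.

Definition is_lub (X Y J : {set U}) : Prop :=
  [/\ J \in S, X \subset J, Y \subset J &
      forall Z, Z \in S -> X \subset Z -> Y \subset Z -> J \subset Z].

Definition is_glb (X Y M : {set U}) : Prop :=
  [/\ M \in S, M \subset X, M \subset Y &
      forall Z, Z \in S -> Z \subset X -> Z \subset Y -> Z \subset M].

Definition is_boolean_lattice : Prop :=
  [/\ (forall X Y, X \in S -> Y \in S -> exists J, is_lub X Y J),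
      (forall X Y, X \in S -> Y \in S -> exists M, is_glb X Y M),
      (forall X Y Z YZ M XY XZ J,
          X \in S -> Y \in S -> Z \in S ->
          is_lub Y Z YZ -> is_glb X YZ M ->
          is_glb X Y XY -> is_glb X Z XZ -> is_lub XY XZ J -> M = J) &
      exists bot top,
        [/\ bot \in S, top \in S,
            (forall X, X \in S -> bot \subset X /\ X \subset top) &
            (forall X, X \in S -> exists2 X', X' \in S &
                 is_glb X X' bot /\ is_lub X X' top)]].
End SetPoset.

(* Main.v *)
Require Import Defs.
From HB Require Import structures.
From mathcomp Require Import all_boot all_order.
Set Implicit Arguments. Unset Strict Implicit. Unset Printing Implicit Defensive.
Import Order.Theory.
Local Open Scope order_scope.


Definition covr d (L : finLatticeType d) (a b : L) : bool :=
  (a < b) && [forall e : L, (a <= e) && (e <= b) ==> (e == a) || (e == b)].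

Lemma coverP d (L : finLatticeType d) (a b : L) :
  covr a b -> a < b /\ (forall e, a <= e -> e <= b -> e = a \/ e = b).
Proof.
move=> /andP[ab /forallP H]; split => // e ae eb.
by move: (H e); rewrite ae eb /= => /orP[] /eqP ->; [left|right].
Qed.

Lemma coverI d (L : finLatticeType d) (a b : L) :
  a < b -> (forall e, a <= e -> e <= b -> e = a \/ e = b) -> covr a b.
Proof.
move=> ab H; rewrite /covr ab /=; apply/forallP => e; apply/implyP => /andP[ae eb].
by case: (H e ae eb) => ->; rewrite eqxx ?orbT.
Qed.

Lemma cover_down d (L : finLatticeType d) (mod : modular_lattice L) (b c e : L) :
  covr c e -> b <= e -> b `|` c = e -> covr (b `&` c) b.
Proof.
move=> /coverP[ce H] be bce; apply: coverI.
  rewrite lt_def leIl andbT; apply/negP => /eqP bc.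
  have bc' : b <= c by rewrite [X in X <= _]bc leIr.
  by move: ce; rewrite -bce (join_r bc') ltxx.
move=> f hf fb.
have cf : c <= f `|` c by exact: leUr.
have fe : f `|` c <= e by rewrite leUx (le_trans fb be) (ltW ce).
case: (H _ cf fe) => E.
  left; apply: le_anti; rewrite hf andbT lexI fb /=.
  by rewrite -E leUl.
right; rewrite -[LHS](join_l hf) meetC.
by rewrite (mod f c b fb) E meetC meet_l.
Qed.

Lemma cover_up d (L : finLatticeType d) (mod : modular_lattice L) (a b c : L) :
  covr a b -> a = b `&` c -> covr c (b `|` c).
Proof.
move=> /coverP[ab H] abc; apply: coverI.
  rewrite lt_def leUr andbT; apply/negP => /eqP E.
  have bc : b <= c by rewrite -E leUl.
  by move: ab; rewrite abc (meet_l bc) ltxx.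
move=> e ce ebc.
have h1 : a <= e `&` b by rewrite abc lexI leIl andbT; exact: le_trans (leIr _ _) ce.
case: (H _ h1 (leIr _ _)) => E.
  left; have M := mod c b e ce.
  rewrite [b `&` e]meetC E abc join_l ?leIr // in M.
  by rewrite M -[LHS](meet_l ebc) meetC joinC.
right; apply: le_anti; rewrite ebc /= leUx ce andbT.
by rewrite -E leIl.
Qed.

Lemma inv_le d (L : finLatticeType d) (inv : L -> L) (hi : i_lattice_inv inv) (x y : L) :
  (inv x <= inv y) = (y <= x).
Proof.
case: hi => K A; apply/idP/idP; last exact: A.
by move/A; rewrite !K.
Qed.

Lemma inv_cover d (L : finLatticeType d) (inv : L -> L) (hi : i_lattice_inv inv) (a b : L) :
  covr a b -> covr (inv b) (inv a).
Proof.
have K := hi.1.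
move=> /coverP[ab H]; apply: coverI.
  by rewrite lt_def inv_le // (ltW ab) andbT (can_eq K) lt_eqF.
move=> f bf fa.
have h1 : a <= inv f by rewrite -(inv_le hi) K.
have h2 : inv f <= b by rewrite -(inv_le hi) K.
by case: (H _ h1 h2) => <-; rewrite K; [right|left].
Qed.

Definition sim d (L : finLatticeType d) (Q : {set L * L}) (x y : L) : Prop :=
  forall c e, x <= c -> e <= y -> covr c e -> (c, e) \in Q.

Definition goodT d (L : finLatticeType d) (Q : {set L * L}) : bool :=
  [forall a : L, forall b : L, forall c : L, forall e : L,
    [&& covr a b, covr c e, a == b `&` c & e == b `|` c] ==>
      (((a, b) \in Q) == ((c, e) \in Q))].

Definition goodI d (L : finLatticeType d) (inv : L -> L) (Q : {set L * L}) : bool :=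
  [forall a : L, forall b : L, covr a b ==> (((a, b) \in Q) == ((inv b, inv a) \in Q))].

Lemma goodTP d (L : finLatticeType d) (Q : {set L * L}) :
  reflect (forall a b c e, covr a b -> covr c e -> a = b `&` c -> e = b `|` c ->
             ((a, b) \in Q) = ((c, e) \in Q)) (goodT Q).
Proof.
apply: (iffP idP).
  move=> /forallP H a b c e ab ce E1 E2.
  move: (H a) => /forallP/(_ b)/forallP/(_ c)/forallP/(_ e)/implyP.
  by rewrite ab ce E1 E2 !eqxx => /(_ isT)/eqP.
move=> H; apply/forallP => a; apply/forallP => b; apply/forallP => c; apply/forallP => e.
apply/implyP => /and4P[ab ce /eqP E1 /eqP E2]; apply/eqP; exact: H.
Qed.

Lemma goodIP d (L : finLatticeType d) (inv : L -> L) (Q : {set L * L}) :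
  reflect (forall a b, covr a b -> ((a, b) \in Q) = ((inv b, inv a) \in Q)) (goodI inv Q).
Proof.
apply: (iffP idP).
  by move=> /forallP H a b ab; move: (H a) => /forallP/(_ b)/implyP/(_ ab)/eqP.
move=> H; apply/forallP => a; apply/forallP => b; apply/implyP => ab; apply/eqP; exact: H.
Qed.


Lemma case_down d (L : finLatticeType d) (mod : modular_lattice L) (Q : {set L * L})
  (gT : goodT Q) (y c e : L) :
  covr c e -> ~~ (e `&` y <= c) ->
  covr ((e `&` y) `&` c) (e `&` y) /\ ((((e `&` y) `&` c, e `&` y) \in Q) = ((c, e) \in Q)).
Proof.
move=> ce ny; have [ce' H] := coverP ce.
have E : (e `&` y) `|` c = e.
  have h1 : c <= c `|` (e `&` y) by exact: leUl.
  have h2 : c `|` (e `&` y) <= e by rewrite leUx (ltW ce') leIl.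
  case: (H _ h1 h2) => E; last by rewrite joinC.
  by move: ny; rewrite -E leUr.
have cv : covr ((e `&` y) `&` c) (e `&` y) by apply: (cover_down mod ce) => //; exact: leIl.
split => //; apply: (goodTP _ gT) => //.
Qed.

Lemma case_up d (L : finLatticeType d) (Q : {set L * L}) (mod : modular_lattice L)
  (gT : goodT Q) (x c e : L) :
  covr c e -> e `&` (c `|` x) = c ->
  covr (c `|` x) (e `|` (c `|` x)) /\ (((c, e) \in Q) = ((c `|` x, e `|` (c `|` x)) \in Q)).
Proof.
move=> ce E.
have cv : covr (c `|` x) (e `|` (c `|` x)) by apply: (cover_up mod ce); rewrite E.
split => //; apply: (goodTP _ gT) => //; by rewrite E.
Qed.

Lemma sim_le d (L : finLatticeType d) (Q : {set L * L}) (x y : L) : y <= x -> sim Q x y.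
Proof.
move=> yx c e xc ey /coverP[ce _].
have : e <= c by apply: le_trans ey (le_trans yx xc).
by move=> /(lt_le_trans ce); rewrite ltxx.
Qed.

Lemma sim_sub d (L : finLatticeType d) (Q : {set L * L}) (x y x' y' : L) :
  sim Q x y -> x <= x' -> y' <= y -> sim Q x' y'.
Proof.
move=> S xx yy c e xc ey; apply: S; [exact: le_trans xx xc| exact: le_trans ey yy].
Qed.

Lemma sim_trans d (L : finLatticeType d) (mod : modular_lattice L) (Q : {set L * L})
  (gT : goodT Q) (x y z : L) :
  x <= y -> y <= z -> sim Q x y -> sim Q y z -> sim Q x z.
Proof.
move=> xy yz Sxy Syz c e xc ez ce; have [ce' H] := coverP ce.
case h: (e `&` y <= c).
  have E : e `&` (c `|` y) = c.
    have M := mod c y e (ltW ce').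
    rewrite meetC (join_l h) in M; by rewrite meetC -M.
  have [cv ->] := case_up mod gT ce E.
  apply: Syz cv; first exact: leUr.
  by rewrite !leUx ez (le_trans (ltW ce') ez) yz.
have [cv <-] := case_down mod gT ce (negbT h).
apply: Sxy cv; last by rewrite leIr.
have xe : x <= e := le_trans xc (ltW ce').
by rewrite !lexI xe xy xc.
Qed.

Lemma sim_join d (L : finLatticeType d) (mod : modular_lattice L) (Q : {set L * L})
  (gT : goodT Q) (x y z : L) :
  x <= y -> sim Q x y -> sim Q (x `|` z) (y `|` z).
Proof.
move=> xy Sxy c e xc ez ce; have [ce' H] := coverP ce.
case h: (e `&` y <= c).
  have zc : z <= c := le_trans (leUr _ _) xc.
  have M := mod z y e (le_trans zc (ltW ce')).
  rewrite [z `|` y]joinC (meet_r ez) [y `&` e]meetC in M.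
  have : e <= c by rewrite -M leUx zc h.
  by move=> /(lt_le_trans ce'); rewrite ltxx.
have [cv <-] := case_down mod gT ce (negbT h).
apply: Sxy cv; last by rewrite leIr.
have xc' : x <= c := le_trans (leUl _ _) xc.
have xe : x <= e := le_trans xc' (ltW ce').
by rewrite !lexI xe xy xc'.
Qed.

Lemma sim_meet d (L : finLatticeType d) (mod : modular_lattice L) (Q : {set L * L})
  (gT : goodT Q) (x y z : L) :
  x <= y -> sim Q x y -> sim Q (x `&` z) (y `&` z).
Proof.
move=> xy Sxy c e xc ez ce; have [ce' H] := coverP ce.
have M := mod c x e (ltW ce').
case h: (e <= c `|` x).
  have ez' : e <= z := le_trans ez (leIr _ _).
  have : e <= c.
    rewrite -(meet_r h) -M leUx lexx /=.
    apply: le_trans xc; rewrite lexI leIl /=; exact: le_trans (leIr _ _) ez'.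
  by move=> /(lt_le_trans ce'); rewrite ltxx.
have E : e `&` (c `|` x) = c.
  have h1 : c <= e `&` (c `|` x) by rewrite lexI (ltW ce') leUl.
  case: (H _ h1 (leIl _ _)) => // E.
  by move: h; rewrite -E leIr.
have [cv ->] := case_up mod gT ce E.
apply: Sxy cv; first exact: leUr.
have ey : e <= y := le_trans ez (leIl _ _).
by rewrite !leUx ey xy (le_trans (ltW ce') ey).
Qed.

Lemma sim_inv d (L : finLatticeType d) (inv : L -> L) (hi : i_lattice_inv inv)
  (Q : {set L * L}) (gI : goodI inv Q) (x y : L) :
  sim Q x y -> sim Q (inv y) (inv x).
Proof.
have K := hi.1.
move=> S c e yc ex ce.
have cv := inv_cover hi ce.
have := S _ _ _ _ cv.
rewrite (goodIP _ _ gI _ _ cv) !K; apply.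
  by rewrite -(inv_le hi) K.
by rewrite -(inv_le hi) K.
Qed.

Definition Rel d (L : finLatticeType d) (Q : {set L * L}) : {set L * L} :=
  [set p | [forall c : L, forall e : L,
     [&& p.1 `&` p.2 <= c, e <= p.1 `|` p.2 & covr c e] ==> ((c, e) \in Q)]].

Lemma RelP d (L : finLatticeType d) (Q : {set L * L}) (x y : L) :
  reflect (sim Q (x `&` y) (x `|` y)) ((x, y) \in Rel Q).
Proof.
rewrite inE; apply: (iffP idP).
  move=> /forallP H c e h1 h2 h3.
  by move: (H c) => /forallP/(_ e)/implyP; apply; rewrite /= h1 h2 h3.
move=> S; apply/forallP => c; apply/forallP => e; apply/implyP => /and3P[h1 h2 h3].
exact: S.
Qed.

Definition congP d (L : finLatticeType d) (inv : L -> L) (th : {set L * L}) : Prop :=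
  [/\ (forall x, (x, x) \in th),
      (forall x y, (x, y) \in th -> (y, x) \in th),
      (forall x y z, (x, y) \in th -> (y, z) \in th -> (x, z) \in th),
      (forall a b c e, (a, b) \in th -> (c, e) \in th ->
          ((a `|` c, b `|` e) \in th) /\ ((a `&` c, b `&` e) \in th)) &
      (forall a b, (a, b) \in th -> (inv a, inv b) \in th)].

Lemma bi_congP d (L : finLatticeType d) (inv : L -> L) (th : {set L * L}) :
  reflect (congP inv th) (bi_congruence inv th).
Proof.
apply: (iffP and5P).
  case=> /forallP h1 h2 h3 h4 h5; split => //.
  - by move=> x y; move: h2 => /forallP/(_ x)/forallP/(_ y)/implyP.
  - move=> x y z a b; move: h3 => /forallP/(_ x)/forallP/(_ y)/forallP/(_ z)/implyP.
    by apply; rewrite a b.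
  - move=> a b c e h h'.
    move: h4 => /forallP/(_ a)/forallP/(_ b)/forallP/(_ c)/forallP/(_ e)/implyP.
    by rewrite h h' => /(_ isT)/andP.
  - by move=> a b; move: h5 => /forallP/(_ a)/forallP/(_ b)/implyP.
case=> h1 h2 h3 h4 h5; split.
- by apply/forallP.
- by apply/forallP => x; apply/forallP => y; apply/implyP; apply: h2.
- apply/forallP => x; apply/forallP => y; apply/forallP => z; apply/implyP => /andP[a b].
  exact: h3 a b.
- apply/forallP => a; apply/forallP => b; apply/forallP => c; apply/forallP => e.
  by apply/implyP => /andP[h h']; apply/andP; apply: h4.
- by apply/forallP => a; apply/forallP => b; apply/implyP; apply: h5.
Qed.

Lemma R_trans d (L : finLatticeType d) (mod : modular_lattice L) (Q : {set L * L})
  (gT : goodT Q) (x y z : L) :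
  (x, y) \in Rel Q -> (y, z) \in Rel Q -> (x, z) \in Rel Q.
Proof.
move=> /RelP Sxy /RelP Syz; apply/RelP.
set a := x `&` y; set b := x `|` y; set c := y `&` z; set e := y `|` z.
have ab : a <= b := le_trans (leIl _ _) (leUl _ _).
have ce : c <= e := le_trans (leIl _ _) (leUl _ _).
have ay : a <= y := leIr _ _.
have yb : y <= b := leUr _ _.
have cy : c <= y := leIl _ _.
have ye : y <= e := leUl _ _.
have S1 : sim Q (a `&` c) c.
  apply: sim_sub (sim_meet mod gT (z:=c) ab Sxy) _ _ => //.
  by rewrite lexI lexx (le_trans cy yb).
have S2 : sim Q e (b `|` e).
  apply: sim_sub (sim_join mod gT (z:=e) ab Sxy) _ _ => //.
  by rewrite leUx lexx (le_trans ay ye).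
have ac : a `&` c <= c := leIr _ _.
have S3 := sim_trans mod gT ac ce S1 Syz.
have S4 := sim_trans mod gT (le_trans ac ce) (leUr _ _) S3 S2.
apply: sim_sub S4 _ _.
  rewrite lexI; apply/andP; split.
    exact: le_trans (leIl _ _) (leIl _ _).
  exact: le_trans (leIr _ _) (leIr _ _).
rewrite leUx; apply/andP; split.
  exact: le_trans (leUl _ _) (leUl _ _).
exact: le_trans (leUr _ _) (leUr _ _).
Qed.

Lemma R_join1 d (L : finLatticeType d) (mod : modular_lattice L) (Q : {set L * L})
  (gT : goodT Q) (x y z : L) :
  (x, y) \in Rel Q -> (x `|` z, y `|` z) \in Rel Q.
Proof.
move=> /RelP S; apply/RelP.
have xy : x `&` y <= x `|` y := le_trans (leIl _ _) (leUl _ _).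
apply: sim_sub (sim_join mod gT (z:=z) xy S) _ _.
  rewrite lexI !leUx !leUr !andbT.
  apply/andP; split; [exact: le_trans (leIl _ _) (leUl _ _)|
                      exact: le_trans (leIr _ _) (leUl _ _)].
rewrite !leUx !leUr !andbT.
apply/andP; split; [exact: le_trans (leUl _ _) (leUl _ _)|
                    exact: le_trans (leUr _ _) (leUl _ _)].
Qed.

Lemma R_meet1 d (L : finLatticeType d) (mod : modular_lattice L) (Q : {set L * L})
  (gT : goodT Q) (x y z : L) :
  (x, y) \in Rel Q -> (x `&` z, y `&` z) \in Rel Q.
Proof.
move=> /RelP S; apply/RelP.
have xy : x `&` y <= x `|` y := le_trans (leIl _ _) (leUl _ _).
apply: sim_sub (sim_meet mod gT (z:=z) xy S) _ _.
  rewrite !lexI !leIr !andbT.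
  apply/andP; split; [exact: le_trans (leIl _ _) (leIl _ _)|
                      exact: le_trans (leIl _ _) (leIr _ _)].
rewrite !leUx !lexI !leIr !andbT.
apply/andP; split; [exact: le_trans (leIl _ _) (leUl _ _)|
                    exact: le_trans (leIl _ _) (leUr _ _)].
Qed.

Lemma R_cong d (L : finLatticeType d) (mod : modular_lattice L) (inv : L -> L)
  (hi : i_lattice_inv inv) (Q : {set L * L}) (gT : goodT Q) (gI : goodI inv Q) :
  bi_congruence inv (Rel Q).
Proof.
apply/bi_congP; split.
- by move=> x; apply/RelP; apply: sim_le; rewrite meetxx joinxx.
- by move=> x y /RelP S; apply/RelP; rewrite meetC joinC.
- by move=> x y z; apply: R_trans.
- move=> a b c e h h'; split.
    apply: (R_trans mod gT (R_join1 mod gT c h)).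
    by rewrite ![b `|` _]joinC; apply: R_join1.
  apply: (R_trans mod gT (R_meet1 mod gT c h)).
  by rewrite ![b `&` _]meetC; apply: R_meet1.
- move=> a b /RelP S; apply/RelP.
  apply: sim_sub (sim_inv hi gI S) _ _.
    by rewrite lexI !inv_le // leUl leUr.
  by rewrite leUx !inv_le // leIl leIr.
Qed.

Definition Pc d (L : finLatticeType d) (th : {set L * L}) : {set L * L} :=
  [set p in th | covr p.1 p.2].
Definition covs d (L : finLatticeType d) : {set L * L} := [set p | covr p.1 p.2].

Lemma P_good d (L : finLatticeType d) (inv : L -> L) (hi : i_lattice_inv inv)
  (th : {set L * L}) : congP inv th -> goodT (Pc th) && goodI inv (Pc th).
Proof.
case=> h1 h2 h3 h4 h5; apply/andP; split.
  apply/goodTP => a b c e ab ce E1 E2; rewrite !inE /= ab ce !andbT.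
  apply/idP/idP => h.
    have [+ _] := h4 _ _ _ _ h (h1 c).
    by rewrite E1 E2 meetUK.
  have [_ +] := h4 _ _ _ _ h (h1 b).
  by rewrite E1 E2 [c `&` b]meetC joinC joinIK.
apply/goodIP => a b ab; rewrite !inE /= ab (inv_cover hi ab) !andbT.
apply/idP/idP => h; first by apply: h2; apply: h5.
by have := h5 _ _ h; rewrite !hi.1 => /h2.
Qed.

Lemma conv d (L : finLatticeType d) (inv : L -> L) (th : {set L * L}) (m M c e : L) :
  congP inv th -> (m, M) \in th -> m <= c -> c <= e -> e <= M -> (c, e) \in th.
Proof.
case=> h1 h2 h3 h4 h5 h mc ce eM.
have [+ _] := h4 _ _ _ _ (h1 c) h.
rewrite (join_l mc) (join_r (le_trans ce eM)) => h'.
have [_ +] := h4 _ _ _ _ h' (h1 e).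
by rewrite (meet_l ce) (meet_r eM).
Qed.

Lemma th_meetjoin d (L : finLatticeType d) (inv : L -> L) (th : {set L * L}) (x y : L) :
  congP inv th -> (x, y) \in th -> (x `&` y, x `|` y) \in th.
Proof.
case=> h1 h2 h3 h4 h5 h.
have [_ +] := h4 _ _ _ _ h (h1 y); rewrite meetxx => A.
have [+ _] := h4 _ _ _ _ (h2 _ _ h) (h1 y); rewrite joinxx joinC => B.
exact: h3 A B.
Qed.

Lemma th_back d (L : finLatticeType d) (inv : L -> L) (th : {set L * L}) (x y : L) :
  congP inv th -> (x `&` y, x `|` y) \in th -> (x, y) \in th.
Proof.
case=> h1 h2 h3 h4 h5 h.
have [_ +] := h4 _ _ _ _ h (h1 x).
rewrite (meet_l (leIl _ _)) (meet_r (leUl _ _)) => A.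
have [_ +] := h4 _ _ _ _ h (h1 y).
rewrite (meet_l (leIr _ _)) (meet_r (leUr _ _)) => B.
exact: h3 (h2 _ _ A) B.
Qed.

Lemma chain d (L : finLatticeType d) (inv : L -> L) (th : {set L * L}) :
  congP inv th -> forall m M : L, m <= M ->
  (forall c e, m <= c -> e <= M -> covr c e -> (c, e) \in th) -> (m, M) \in th.
Proof.
case=> h1 h2 h3 h4 h5.
move=> m M; move: {2}#|[set z : L | m <= z]| (leqnn #|[set z : L | m <= z]|) => n.
elim: n m => [|n IH] m.
  move=> hn; suff : 0 < 0 by [].
  by apply: leq_trans hn; apply/card_gt0P; exists m; rewrite inE.
move=> hn mM H.
have [E|ne] := eqVneq m M; first by rewrite E h1.
have mM' : m < M by rewrite lt_def eq_sym ne mM.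
case: (@arg_minnP _ M (fun z => (m < z) && (z <= M)) (fun z => #|[set w : L | w <= z]|));
  first by rewrite mM' lexx.
move=> c /andP[mc cM] minc.
have cv : covr m c.
  apply: coverI => // e me ec.
  have [E|nem] := eqVneq e m; first by left.
  right; apply/eqP; apply/negP => nec.
  have me' : m < e by rewrite lt_def nem me.
  have := minc e; rewrite me' (le_trans ec cM) => /(_ isT).
  have pr : [set w : L | w <= e] \proper [set w : L | w <= c].
    apply/properP; split.
      by apply/subsetP => w; rewrite !inE => /le_trans; apply.
    exists c; rewrite !inE ?lexx //.
    by apply/negP => ce; apply: nec; rewrite eq_le ec ce.
  by rewrite leqNgt (proper_card pr).
have A : (m, c) \in th by apply: H => //; exact: ltW.
have B : (c, M) \in th.
  apply: IH => //; last by move=> a b ca bM ab; apply: H => //; exact: le_trans (ltW mc) ca.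
  have pr : [set z : L | c <= z] \proper [set z : L | m <= z].
    apply/properP; split.
      by apply/subsetP => w; rewrite !inE; apply: le_trans (ltW mc).
    exists m; rewrite !inE ?lexx //.
    by apply/negP => cm; have := lt_le_trans mc cm; rewrite ltxx.
  by rewrite -ltnS; apply: leq_trans hn; apply: proper_card.
exact: h3 A B.
Qed.

Lemma R_P d (L : finLatticeType d) (inv : L -> L) (th : {set L * L}) :
  congP inv th -> Rel (Pc th) = th.
Proof.
move=> hC; apply/setP => -[x y]; apply/RelP/idP.
  move=> S; apply: (th_back hC).
  apply: (chain hC); first exact: le_trans (leIl _ _) (leUl _ _).
  move=> c e h1 h2 h3; have := S c e h1 h2 h3; rewrite inE => /andP[].
  done.
move=> h c e h1 h2 h3; rewrite inE h3 andbT.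
apply: (conv hC (th_meetjoin hC h) h1 _ h2).
by have [/ltW] := coverP h3.
Qed.

Lemma inRel_cover d (L : finLatticeType d) (Q : {set L * L}) (a b : L) :
  covr a b -> ((a, b) \in Rel Q) = ((a, b) \in Q).
Proof.
move=> ab; have [ab' H] := coverP ab.
apply/RelP/idP; rewrite (meet_l (ltW ab')) (join_r (ltW ab')).
  by move=> S; apply: S => //.
move=> h c e ac eb ce; have [ce' _] := coverP ce.
have cb : c <= b := le_trans (ltW ce') eb.
have ae : a <= e := le_trans ac (ltW ce').
case: (H c ac cb) => Ec.
  case: (H e ae eb) => Ee; last by rewrite Ec Ee.
  by move: ce'; rewrite Ec Ee ltxx.
by move: (lt_le_trans ce' eb); rewrite Ec ltxx.
Qed.

Lemma P_R d (L : finLatticeType d) (Q : {set L * L}) :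
  Q \subset covs L -> Pc (Rel Q) = Q.
Proof.
move=> /subsetP sQ; apply/setP => -[a b]; rewrite inE /=.
case ab: (covr a b); first by rewrite andbT inRel_cover.
rewrite andbF; apply/esym/negP => /sQ; rewrite inE /= ab.
done.
Qed.

Lemma Rel_mono d (L : finLatticeType d) (Q1 Q2 : {set L * L}) :
  Q1 \subset Q2 -> Rel Q1 \subset Rel Q2.
Proof.
move=> /subsetP s; apply/subsetP => -[x y] /RelP S; apply/RelP.
by move=> c e h1 h2 h3; apply: s; apply: S.
Qed.

Lemma Pc_mono d (L : finLatticeType d) (X Y : {set L * L}) :
  X \subset Y -> Pc X \subset Pc Y.
Proof.
move=> /subsetP s; apply/subsetP => p; rewrite !inE => /andP[/s -> ->]; done.
Qed.

Lemma Pc_sub d (L : finLatticeType d) (X : {set L * L}) : Pc X \subset covs L.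
Proof. by apply/subsetP => p; rewrite !inE => /andP[]. Qed.

Lemma card_boolfam (T : finType) : forall (U : {set T}) (F : {set {set T}}),
  (forall Q, Q \in F -> Q \subset U) -> set0 \in F ->
  (forall Q, Q \in F -> U :\: Q \in F) ->
  (forall Q1 Q2, Q1 \in F -> Q2 \in F -> Q1 :&: Q2 \in F) ->
  exists n, #|F| = (2 ^ n)%N.
Proof.
move=> U0; move: {2}#|U0| (leqnn #|U0|) => k.
elim: k U0 => [|k IH] U.
  rewrite leqn0 cards_eq0 => /eqP -> F sub h0 _ _.
  exists 0%N; apply/eqP; rewrite expn0; apply/cards1P; exists set0.
  apply/setP => Q; rewrite inE; apply/idP/idP => [/sub|/eqP -> //].
  by rewrite subset0.
move=> hU F sub h0 hC hI.
have hU' : forall Q1 Q2, Q1 \in F -> Q2 \in F -> Q1 :|: Q2 \in F.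
  move=> Q1 Q2 q1 q2.
  have -> : Q1 :|: Q2 = U :\: ((U :\: Q1) :&: (U :\: Q2)).
    apply/setP => x; rewrite !inE.
    case x1: (x \in Q1); first by rewrite (subsetP (sub _ q1) _ x1).
    case x2: (x \in Q2); first by rewrite (subsetP (sub _ q2) _ x2) andbT.
    by case: (x \in U); rewrite /= ?andbF ?andbT.
  by apply: (hC); apply: (hI); apply: (hC).
have [U0|[u uU]] := set_0Vmem U.
  exists 0%N; apply/eqP; rewrite expn0; apply/cards1P; exists set0.
  apply/setP => Q; rewrite inE; apply/idP/idP => [/sub|/eqP -> //].
  by rewrite U0 subset0.
have UF : U \in F by rewrite -(setD0 U); apply: (hC).
case: (@arg_minnP _ U (fun Q => (Q \in F) && (u \in Q)) (fun Q => #|Q|));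
  first by rewrite UF uU.
move=> a /andP[aF ua] mina.
have key : forall Q, Q \in F -> u \in Q -> a \subset Q.
  move=> Q QF uQ; have aQF := hI _ _ aF QF.
  have := mina (a :&: Q); rewrite aQF inE ua uQ => /(_ isT) le.
  have : a :&: Q == a by rewrite eqEcard subsetIl le.
  by move/eqP <-; apply: subsetIr.
have dich : forall Q, Q \in F -> (a \subset Q) || (a :&: Q == set0).
  move=> Q QF; case uQ: (u \in Q); first by rewrite key.
  have : a \subset U :\: Q by apply: key; [apply: (hC) | rewrite inE uQ uU].
  move=> aUQ; apply/orP; right; apply/eqP/setP => x; rewrite !inE.
  apply/negP => /andP[xa xQ]; move: (subsetP aUQ _ xa); rewrite inE xQ.
  done.
set U' := U :\: a.
set F' := [set Q in F | Q \subset U'].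
have U'F : U' \in F by apply: (hC).
have [n hn] : exists n, #|F'| = (2 ^ n)%N.
  apply: (IH U').
  - rewrite -ltnS; apply: leq_trans hU; apply: proper_card.
    apply/properP; split; first exact: subsetDl.
    by exists u; rewrite // inE ua.
  - by move=> Q; rewrite inE => /andP[].
  - by rewrite inE h0 sub0set.
  - move=> Q; rewrite !inE => /andP[QF QU]; rewrite subsetDl andbT.
    have -> : U' :\: Q = (U :\: Q) :&: U'.
      by apply/setP => x; rewrite !inE; case: (x \in Q); case: (x \in a); case: (x \in U).
    by apply: (hI) => //; apply: (hC).
  - move=> Q1 Q2; rewrite !inE => /andP[q1 s1] /andP[q2 s2].
    by rewrite hI // (subset_trans (subsetIl _ _) s1).
exists n.+1.
have FE : F = F' :|: [set Q :|: a | Q in F'].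
  apply/setP => Q; rewrite !inE; apply/idP/idP.
    move=> QF; have := dich _ QF; case/orP => [aQ|/eqP aQ].
      apply/orP; right; apply/imsetP; exists (Q :&: U').
        by rewrite inE hI // subsetIr.
      apply/setP => x; rewrite !inE; case xa: (x \in a) => /=.
        by rewrite orbT (subsetP aQ _ xa).
      case xQ: (x \in Q); rewrite /= ?orbF ?andbT ?andbF //=; first by rewrite (subsetP (sub _ QF) _ xQ).
    rewrite QF /=; apply/orP; left; apply/subsetP => x xQ; rewrite inE (subsetP (sub _ QF) _ xQ) andbT.
    by apply/negP => xa; move/setP: aQ => /(_ x); rewrite !inE xa xQ.
  case/orP => [/andP[] //|/imsetP[Q' + ->]]; rewrite inE => /andP[Q'F _].
  exact: hU'.
have inj : {in F' &, injective (fun Q => Q :|: a)}.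
  move=> Q1 Q2; rewrite !inE => /andP[_ s1] /andP[_ s2] E.
  have h : forall Q : {set T}, Q \subset U' -> (Q :|: a) :\: a = Q.
    move=> Q s; apply/setP => x; rewrite !inE; case xa: (x \in a) => /=; last by rewrite orbF.
    by apply/esym/negP => xQ; move: (subsetP s _ xQ); rewrite inE xa.
  by rewrite -(h _ s1) E h.
have disj : F' :&: [set Q :|: a | Q in F'] = set0.
  apply/setP => Q; rewrite !inE; apply/negP => /andP[/andP[_ s] /imsetP[Q' _ EQ]].
  by move: (subsetP s u); rewrite EQ !inE ua orbT => /(_ isT).
by rewrite FE cardsU disj cards0 subn0 card_in_imset // hn expnS mul2n addnn.
Qed.

Lemma goodT_U d (L : finLatticeType d) (Q1 Q2 : {set L * L}) :
  goodT Q1 -> goodT Q2 -> goodT (Q1 :|: Q2).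
Proof.
move=> /goodTP h1 /goodTP h2; apply/goodTP => a b c e ab ce E1 E2.
by rewrite !inE (h1 a b c e) // (h2 a b c e).
Qed.

Lemma goodT_I d (L : finLatticeType d) (Q1 Q2 : {set L * L}) :
  goodT Q1 -> goodT Q2 -> goodT (Q1 :&: Q2).
Proof.
move=> /goodTP h1 /goodTP h2; apply/goodTP => a b c e ab ce E1 E2.
by rewrite !inE (h1 a b c e) // (h2 a b c e).
Qed.

Lemma goodT_D d (L : finLatticeType d) (Q : {set L * L}) :
  goodT Q -> goodT (covs L :\: Q).
Proof.
move=> /goodTP h; apply/goodTP => a b c e ab ce E1 E2.
by rewrite !inE /= ab ce (h a b c e).
Qed.

Lemma goodT_0 d (L : finLatticeType d) : goodT (set0 : {set L * L}).
Proof. by apply/goodTP => *; rewrite !inE. Qed.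

Lemma goodI_U d (L : finLatticeType d) (inv : L -> L) (Q1 Q2 : {set L * L}) :
  goodI inv Q1 -> goodI inv Q2 -> goodI inv (Q1 :|: Q2).
Proof.
move=> /goodIP h1 /goodIP h2; apply/goodIP => a b ab.
by rewrite !inE (h1 a b) // (h2 a b).
Qed.

Lemma goodI_I d (L : finLatticeType d) (inv : L -> L) (Q1 Q2 : {set L * L}) :
  goodI inv Q1 -> goodI inv Q2 -> goodI inv (Q1 :&: Q2).
Proof.
move=> /goodIP h1 /goodIP h2; apply/goodIP => a b ab.
by rewrite !inE (h1 a b) // (h2 a b).
Qed.

Lemma goodI_D d (L : finLatticeType d) (inv : L -> L) (hi : i_lattice_inv inv)
  (Q : {set L * L}) : goodI inv Q -> goodI inv (covs L :\: Q).
Proof.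
move=> /goodIP h; apply/goodIP => a b ab.
by rewrite !inE /= ab (inv_cover hi ab) (h a b).
Qed.

Lemma goodI_0 d (L : finLatticeType d) (inv : L -> L) : goodI inv (set0 : {set L * L}).
Proof. by apply/goodIP => *; rewrite !inE. Qed.

Unset Implicit Arguments.

Theorem corollary4p9 (d : Order.disp_t) (L : finLatticeType d) (inv : L -> L) :
  modular_lattice L -> i_lattice_inv inv ->
  is_boolean_lattice (Con_BI inv) /\ exists n : nat, #|Con_BI inv| = (2 ^ n)%N.
Proof.
move=> mod hi.
set S := Con_BI inv.
set F := [set Q : {set L * L} | [&& Q \subset covs L, goodT Q & goodI inv Q]].
have congS : forall X, X \in S -> congP inv X by move=> X; rewrite inE => /bi_congP.
have PF : forall X, X \in S -> Pc X \in F.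
  move=> X /congS C; rewrite inE Pc_sub /=; have HH := P_good hi C. exact HH.
have RP : forall X, X \in S -> Rel (Pc X) = X by move=> X /congS; apply: R_P.
have RS : forall Q, Q \in F -> Rel Q \in S.
  by move=> Q; rewrite !inE => /and3P[_ gT gI]; apply: R_cong.
have PR : forall Q, Q \in F -> Pc (Rel Q) = Q.
  by move=> Q; rewrite !inE => /and3P[s _ _]; apply: P_R.
have FU : forall Q1 Q2, Q1 \in F -> Q2 \in F -> Q1 :|: Q2 \in F.
  move=> Q1 Q2; rewrite !inE => /and3P[s1 t1 i1] /and3P[s2 t2 i2].
  by rewrite subUset s1 s2 goodT_U // goodI_U.
have FI : forall Q1 Q2, Q1 \in F -> Q2 \in F -> Q1 :&: Q2 \in F.
  move=> Q1 Q2; rewrite !inE => /and3P[s1 t1 i1] /and3P[s2 t2 i2].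
  by rewrite (subset_trans (subsetIl _ _) s1) goodT_I // goodI_I.
have FD : forall Q, Q \in F -> covs L :\: Q \in F.
  move=> Q; rewrite !inE => /and3P[s1 t1 i1].
  by rewrite subsetDl goodT_D // goodI_D.
have F0 : set0 \in F by rewrite inE sub0set goodT_0 goodI_0.
have Fc : covs L \in F by rewrite -(setD0 (covs L)); apply: FD.
have Fsub : forall Q, Q \in F -> Q \subset covs L by move=> Q; rewrite inE => /and3P[].
have Rel_le : forall Y Q : {set L * L}, Y \in S -> Q \subset Pc Y -> Rel Q \subset Y.
  by move=> Y Q YS s; rewrite -(RP Y YS); apply: Rel_mono.
have le_Rel : forall X Q : {set L * L}, X \in S -> Pc X \subset Q -> X \subset Rel Q.
  by move=> X Q XS s; rewrite -(RP X XS); apply: Rel_mono.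
have lubP : forall X Y J : {set L * L}, X \in S -> Y \in S -> is_lub S X Y J -> Pc J = Pc X :|: Pc Y.
  move=> X Y J XS YS [JS XJ YJ min]; apply/eqP; rewrite eqEsubset; apply/andP; split.
    have UF := FU _ _ (PF _ XS) (PF _ YS).
    have := min _ (RS _ UF) (le_Rel _ _ XS (subsetUl _ _)) (le_Rel _ _ YS (subsetUr _ _)).
    by move/Pc_mono; rewrite PR.
  by rewrite subUset !Pc_mono.
have glbP : forall X Y M : {set L * L}, X \in S -> Y \in S -> is_glb S X Y M -> Pc M = Pc X :&: Pc Y.
  move=> X Y M XS YS [MS MX MY max]; apply/eqP; rewrite eqEsubset; apply/andP; split.
    by rewrite subsetI !Pc_mono.
  have IF := FI _ _ (PF _ XS) (PF _ YS).
  have := max _ (RS _ IF) (Rel_le _ _ XS (subsetIl _ _)) (Rel_le _ _ YS (subsetIr _ _)).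
  by move/Pc_mono; rewrite PR.
split; last first.
  have [n hn] := @card_boolfam _ (covs L) F Fsub F0 FD FI.
  exists n; rewrite -hn.
  have -> : F = [set Pc X | X in S].
    apply/setP => Q; apply/idP/imsetP.
      by move=> QF; exists (Rel Q); [apply: RS | rewrite PR].
    by case=> X XS ->; apply: PF.
  rewrite card_in_imset //.
  by move=> X Y XS YS E; rewrite -(RP X XS) -(RP Y YS) E.
split.
- move=> X Y XS YS; exists (Rel (Pc X :|: Pc Y)); split.
  + by apply: RS; apply: FU; apply: PF.
  + by apply: le_Rel => //; apply: subsetUl.
  + by apply: le_Rel => //; apply: subsetUr.
  + move=> Z ZS XZ YZ; apply: Rel_le => //.
    by rewrite subUset !Pc_mono.
- move=> X Y XS YS; exists (Rel (Pc X :&: Pc Y)); split.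
  + by apply: RS; apply: FI; apply: PF.
  + by apply: Rel_le => //; apply: subsetIl.
  + by apply: Rel_le => //; apply: subsetIr.
  + move=> Z ZS ZX ZY; apply: le_Rel => //.
    by rewrite subsetI !Pc_mono.
- move=> X Y Z YZ M XY XZ J XS YS ZS hYZ hM hXY hXZ hJ.
  have YZS : YZ \in S by case: hYZ.
  have XYS : XY \in S by case: hXY.
  have XZS : XZ \in S by case: hXZ.
  have MS : M \in S by case: hM.
  have JS : J \in S by case: hJ.
  rewrite -(RP _ MS) -(RP _ JS) (glbP _ _ _ XS YZS hM) (lubP _ _ _ XYS XZS hJ).
  by rewrite (lubP _ _ _ YS ZS hYZ) (glbP _ _ _ XS YS hXY) (glbP _ _ _ XS ZS hXZ) setIUr.
- exists (Rel set0), (Rel (covs L)); split.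
  + exact: RS.
  + exact: RS.
  + move=> X XS; split; first by apply: Rel_le => //; apply: sub0set.
    by apply: le_Rel => //; apply: Pc_sub.
  + move=> X XS; exists (Rel (covs L :\: Pc X)); first by apply: RS; apply: FD; apply: PF.
    split; split.
    * exact: RS.
    * by apply: Rel_le => //; apply: sub0set.
    * by apply: Rel_le; [apply: RS; apply: FD; apply: PF | rewrite PR ?sub0set //; apply: FD; apply: PF].
    * move=> Z ZS ZX ZX'; apply: le_Rel => //.
      have h1 := Pc_mono ZX; have h2 := Pc_mono ZX'.
      rewrite PR in h2; last by apply: FD; apply: PF.
      apply/subsetP => p pZ; move: (subsetP h1 p pZ) (subsetP h2 p pZ).
      by rewrite !inE => ->.
    * exact: RS.
    * by apply: le_Rel => //; apply: Pc_sub.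
    * by apply: Rel_le; [exact: RS | rewrite PR // subsetDl].
    * move=> Z ZS XZ X'Z; apply: Rel_le => //.
      have h1 := Pc_mono XZ; have h2 := Pc_mono X'Z.
      rewrite PR in h2; last by apply: FD; apply: PF.
      apply/subsetP => p pc.
      case pX: (p \in Pc X); first exact: (subsetP h1).
      by apply: (subsetP h2); rewrite inE pX.
Qed.
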